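(* Let $m\le n$, $a>0$, $\lambda>0$, let $\mathscr{A}:\mathbb{R}^{m\times n}\to\mathbb{R}^p$ be linear with $\mathscr{A}(X)=A\,\mathrm{vec}(X)$ for $A\in\mathbb{R}^{p\times mn}$, $b\in\mathbb{R}^p$, and $0<\mu<\|A\|_2^{-2}$. If $X^*$ is a global minimizer of $\frac12\|\mathscr{A}(X)-b\|_2^2+\lambda T(X)$ over $X\in\mathbb{R}^{m\times n}$, then $$X^*=G_{\lambda\mu,a}(B_\mu(X^* )).$$ Equivalently, if $B_\mu(X^* )=U\,\mathrm{Diag}(\sigma^*_b)V^T$ is an SVD, then $X^*=U\,\mathrm{Diag}(g_{\lambda\mu,a}(\sigma^*_{b,1}),\dots,g_{\lambda\mu,a}(\sigma^*_{b,m}))V^T$.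
   Context: $\mathrm{vec}(X)$ stacks columns; $\|A\|_2$ is the spectral norm; $\mathscr{A}^*$ is the adjoint of $\mathscr{A}$ for the Frobenius inner product. $\rho_a(x)=\frac{(a+1)x}{a+x}$, $T(X)=\sum_{i=1}^{\mathrm{rank}(X)}\rho_a(\sigma_i(X))$ over singular values. $B_\mu(Z)=Z+\mu\mathscr{A}^*(b-\mathscr{A}(Z))$. For $\lambda'>0$: $h_{\lambda'}(x)=\mathrm{sgn}(x)\{\frac23(a+|x|)\cos(\varphi(x)/3)-\frac{2a}{3}+\frac{|x|}{3}\}$ with $\varphi(x)=\arccos(1-\frac{27\lambda' a(a+1)}{2(a+|x|)^3})$ and $\mathrm{sgn}(0)=0$; threshold $t=\lambda'\frac{a+1}{a}$ if $\lambda'\le\frac{a^2}{2(a+1)}$ and $t=\sqrt{2\lambda'(a+1)}-\frac a2$ otherwise; $g_{\lambda',a}(w)=0$ if $|w|\le t$, $h_{\lambda'}(w)$ if $|w|>t$; and for $Y$ with SVD $Y=U\mathrm{Diag}(\sigma)V^T$, $G_{\lambda',a}(Y)=U\,\mathrm{Diag}(g_{\lambda',a}(\sigma_1),\dots,g_{\lambda',a}(\sigma_m))V^T$. *)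

(* Defs.v *)
From Stdlib Require Import Reals Lra Lia ClassicalEpsilon.
Open Scope R_scope.

(* Matrices are functions nat -> nat -> R; only entries in range matter. *)

Fixpoint rsum (f : nat -> R) (n : nat) : R :=
  match n with O => 0 | S k => rsum f k + f k end.

Definition vnorm (q : nat) (v : nat -> R) : R := sqrt (rsum (fun k => v k ^ 2) q).

Definition matvec (p q : nat) (A : nat -> nat -> R) (v : nat -> R) : nat -> R :=
  fun r => rsum (fun k => A r k * v k) q.

Definition is_spectral_norm (p q : nat) (A : nat -> nat -> R) (s : R) : Prop :=
  is_lub (fun r => exists v, vnorm q v = 1 /\ r = vnorm p (matvec p q A v)) s.

(* vec(X) of an m x n matrix, stacking columns: vec(X)_(i + m*j) = X i j *)
Definition vecm (m n : nat) (X : nat -> nat -> R) : nat -> R :=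
  fun k => X (k mod m)%nat (k / m)%nat.

Definition calA (m n p : nat) (A : nat -> nat -> R) (X : nat -> nat -> R) : nat -> R :=
  matvec p (m * n) A (vecm m n X).

(* adjoint of calA for the Frobenius inner product: calA^*(y) = mat(A^T y),
   i.e. entry (i,j) is (A^T y)_(i + m*j) *)
Definition calA_adj (m n p : nat) (A : nat -> nat -> R) (y : nat -> R) : nat -> nat -> R :=
  fun i j => rsum (fun r => A r (i + m * j)%nat * y r) p.

Definition is_svd (m n : nat) (Y : nat -> nat -> R)
    (U : nat -> nat -> R) (s : nat -> R) (V : nat -> nat -> R) : Prop :=
  (forall k l, (k < m)%nat -> (l < m)%nat ->
     rsum (fun i => U i k * U i l) m = (if Nat.eq_dec k l then 1 else 0)) /\
  (forall k l, (k < m)%nat -> (l < m)%nat ->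
     rsum (fun j => V j k * V j l) n = (if Nat.eq_dec k l then 1 else 0)) /\
  (forall k, (k < m)%nat -> 0 <= s k) /\
  (forall k, (S k < m)%nat -> s (S k) <= s k) /\
  (forall i j, (i < m)%nat -> (j < n)%nat ->
     Y i j = rsum (fun k => U i k * s k * V j k) m).

(* singular values sigma_1 >= ... >= sigma_m (indexed 0..m-1), chosen via an SVD *)
Definition singvals (m n : nat) (X : nat -> nat -> R) : nat -> R :=
  epsilon (inhabits (fun _ : nat => 0))
    (fun s => exists U V, is_svd m n X U s V).

Fixpoint count_nz (s : nat -> R) (k : nat) : nat :=
  match k with
  | O => O
  | S k' => (count_nz s k' + (if Req_EM_T (s k') 0 then 0 else 1))%nat
  end.
Definition rankm (m n : nat) (X : nat -> nat -> R) : nat := count_nz (singvals m n X) m.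

Definition rho (a x : R) : R := (a + 1) * x / (a + x).

Definition Tfun (a : R) (m n : nat) (X : nat -> nat -> R) : R :=
  rsum (fun i => rho a (singvals m n X i)) (rankm m n X).

Definition objective (a lam : R) (m n p : nat) (A : nat -> nat -> R) (b : nat -> R)
    (X : nat -> nat -> R) : R :=
  / 2 * rsum (fun r => (calA m n p A X r - b r) ^ 2) p + lam * Tfun a m n X.

Definition Bmu (mu : R) (m n p : nat) (A : nat -> nat -> R) (b : nat -> R)
    (Z : nat -> nat -> R) : nat -> nat -> R :=
  fun i j => Z i j + mu * calA_adj m n p A (fun r => b r - calA m n p A Z r) i j.

Definition sgn (x : R) : R := if Rlt_dec 0 x then 1 else if Rlt_dec x 0 then -1 else 0.

Definition phi (lam' a x : R) : R :=
  acos (1 - 27 * lam' * a * (a + 1) / (2 * (a + Rabs x) ^ 3)).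

Definition hfun (lam' a x : R) : R :=
  sgn x * (2 / 3 * (a + Rabs x) * cos (phi lam' a x / 3) - 2 * a / 3 + Rabs x / 3).

Definition thresh (lam' a : R) : R :=
  if Rle_dec lam' (a ^ 2 / (2 * (a + 1))) then lam' * (a + 1) / a
  else sqrt (2 * lam' * (a + 1)) - a / 2.

Definition gfun (lam' a w : R) : R :=
  if Rle_dec (Rabs w) (thresh lam' a) then 0 else hfun lam' a w.

(* Main.v *)
Require Import Defs.
From Stdlib Require Import Reals Lra Lia Psatz ClassicalEpsilon.
From mathcomp Require ssreflect ssrbool eqtype ssrnat fintype bigop ssralg ssrnum matrix mxalgebra interval.
From mathcomp Require Rstruct Rstruct_topology boolp classical_sets topology normedtype interval_inference derive.
Open Scope R_scope.
Set Bullet Behavior "Strict Subproofs".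


Definition delta (k l : nat) : R := if Nat.eq_dec k l then 1 else 0.

Module Br.
Import ssreflect ssrfun ssrbool eqtype ssrnat fintype bigop ssralg ssrnum matrix mxalgebra Rstruct.
Import GRing.Theory.
Lemma rsum_big (f : nat -> R) n : rsum f n = (\sum_(i < n) f i)%R.
Proof.
elim: n => [|n IH] /=; first by rewrite big_ord0.
by rewrite big_ord_recr /= IH.
Qed.

Lemma ker_exists (q k : nat) (w : nat -> nat -> R) : (k < q)%coq_nat ->
  exists v : nat -> R, (exists i, (i < q)%coq_nat /\ v i <> 0) /\
    forall j, (j < k)%coq_nat -> rsum (fun i => v i * w j i) q = 0.
Proof.
move=> /ltP kq.
pose A : 'M[R]_(q, k) := (\matrix_(i, j) w (nat_of_ord j) (nat_of_ord i))%R.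
have : (kermx A != 0)%R.
  rewrite -mxrank_eq0 mxrank_ker subn_eq0 -ltnNge.
  exact: leq_ltn_trans (rank_leq_col A) kq.
move=> /eqP nz.
have [i [j Hij]] : exists i j, kermx A i j <> 0%R.
  apply: Classical_Prop.NNPP => H; apply: nz; apply/matrixP => i j.
  rewrite [X in _ = X]mxE; apply: Classical_Prop.NNPP => Hn; apply: H. exists i. exists j. exact Hn.
pose v := fun l : nat => match Compare_dec.lt_dec l q with
  | left H => kermx A i (Ordinal (introT ltP H)) | right _ => 0 end.
exists v; split.
  exists (nat_of_ord j); split; first exact/ltP.
  rewrite /v; case: Compare_dec.lt_dec => [H|H]; last by case: H; exact/ltP.
  by rewrite (_ : Ordinal _ = j) //; apply: val_inj.
move=> jj /ltP Hjj.
have := mulmx_ker A; move/matrixP => /(_ i (Ordinal Hjj)).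
rewrite !mxE rsum_big => H0.
apply: etrans H0; apply: eq_bigr => l _.
rewrite /v [A _ _]mxE; case: Compare_dec.lt_dec => [H|H]; last by case: H; exact/ltP.
have -> : Ordinal (introT ltP H) = l by apply: val_inj.
by [].
Qed.

Lemma orth_sq (m : nat) (U : nat -> nat -> R) :
  (forall k l, (k < m)%coq_nat -> (l < m)%coq_nat ->
     rsum (fun i => U i k * U i l) m = delta k l) ->
  forall i j, (i < m)%coq_nat -> (j < m)%coq_nat ->
     rsum (fun k => U i k * U j k) m = delta i j.
Proof.
move=> H i j /ltP Hi /ltP Hj.
pose M : 'M[R]_m := (\matrix_(a, b) U (nat_of_ord a) (nat_of_ord b))%R.
have E : (M^T *m M = 1%:M)%R.
  apply/matrixP => k l.
  have := H k l (ltP (ltn_ord k)) (ltP (ltn_ord l)); rewrite rsum_big => Hkl.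
  rewrite [LHS]mxE.
  rewrite [RHS]mxE.
  have -> : (\sum_j0 M^T k j0 * M j0 l = \sum_(i < m) (U i k * U i l)%R)%R.
    by apply: eq_bigr => a _; rewrite !mxE.
  rewrite Hkl /delta; case: Nat.eq_dec => [e|e]; case: eqP => // e'.
    by case: e'; apply: val_inj.
  by case: e; rewrite e'.
have E2 := mulmx1C E.
have := congr1 (fun X : 'M[R]_m => X (Ordinal Hi) (Ordinal Hj)) E2.
rewrite [LHS]mxE [RHS]mxE rsum_big => E3.
have -> : delta i j = ((Ordinal Hi == Ordinal Hj)%:R)%R.
  rewrite /delta; case: Nat.eq_dec => [e|e]; case: eqP => // e'.
    by case: e'; apply: val_inj.
  by case: e; case: e'.
rewrite -E3; apply: eq_bigr => a _; by rewrite !mxE.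
Qed.
End Br.
Definition dotv (q : nat) (u v : nat -> R) : R := rsum (fun i => u i * v i) q.
Definition Qf (q : nat) (S : nat -> nat -> R) (v : nat -> R) : R :=
  rsum (fun i => rsum (fun l => S i l * v i * v l) q) q.

Lemma rsum_ext (f g : nat -> R) n :
  (forall i, (i < n)%nat -> f i = g i) -> rsum f n = rsum g n.
Proof.
induction n as [|n IH]; intros H; simpl; [reflexivity|].
rewrite IH, (H n); [reflexivity|lia|intros; apply H; lia].
Qed.

Lemma sq_le_rsum (v : nat -> R) q i : (i < q)%nat -> v i * v i <= rsum (fun j => v j * v j) q.
Proof.
induction q as [|q IH]; intros H; [lia|simpl].
assert (Hn : forall n, 0 <= rsum (fun j => v j * v j) n).
{ induction n; simpl; [lra|]. pose proof (Rle_0_sqr (v n)); unfold Rsqr in *; lra. }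
destruct (Nat.eq_dec i q) as [->|Hne].
- pose proof (Hn q); lra.
- pose proof (IH ltac:(lia)); pose proof (Rle_0_sqr (v q)); unfold Rsqr in *; lra.
Qed.

Definition cons_ok (q k : nat) (w : nat -> nat -> R) (v : nat -> R) : Prop :=
  dotv q v v = 1 /\ forall j, (j < k)%nat -> dotv q v (w j) = 0.

Module Br2.
Import ssreflect ssrfun ssrbool eqtype ssrnat fintype bigop ssralg ssrnum matrix mxalgebra interval.
Import Rstruct Rstruct_topology boolp classical_sets topology normedtype interval_inference derive.
Import GRing.Theory Num.Theory.
Local Open Scope classical_set_scope.

Definition ent {q} (M : 'rV[R]_q) (i : nat) : R :=
  match Compare_dec.lt_dec i q with
  | left H => M ord0 (Ordinal (introT ltP H)) | right _ => 0 end.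

Lemma ent_cont q i : continuous (fun M : 'rV[R]_q => ent M i).
Proof.
rewrite /ent; case: (Compare_dec.lt_dec i q) => H.
  exact: coord_continuous.
exact: cst_continuous.
Qed.

Lemma rsum_cont q (F : nat -> 'rV[R]_q -> R) n :
  (forall i, continuous (F i)) -> continuous (fun M => rsum (fun i => F i M) n).
Proof.
move=> HF; elim: n => [|n IH] /=.
  exact: cst_continuous.
move=> x; exact: (@continuousD R R^o _ _ _ x (IH x) (HF n x)).
Qed.

Lemma mul_cont q (F G : 'rV[R]_q -> R) :
  continuous F -> continuous G -> continuous (fun M => F M * G M).
Proof. move=> HF HG x; exact: (@continuousM R _ _ _ x (HF x) (HG x)). Qed.


Lemma ent_row q (v : nat -> R) i : (i < q)%coq_nat ->
  ent (\row_(l < q) v (nat_of_ord l))%R i = v i.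
Proof.
move=> Hi; rewrite /ent; case: Compare_dec.lt_dec => H; last by [].
by rewrite mxE.
Qed.

Lemma max_exists (q k : nat) (S w : nat -> nat -> R) :
  (exists v, cons_ok q k w v) ->
  exists u, cons_ok q k w u /\ forall v, cons_ok q k w v -> Rle (Qf q S v) (Qf q S u).
Proof.
move=> [v0 Hv0].
pose P := cons_ok q k w.
have rowP v : P v -> P (ent (\row_(l < q) v (nat_of_ord l))%R).
  move=> [H1 H2]; split.
    rewrite -H1 /dotv; apply: rsum_ext => i Hi; by rewrite ent_row.
  move=> j Hj; rewrite -(H2 j Hj) /dotv; apply: rsum_ext => i Hi; rewrite ent_row //.
have Qrow v : Qf q S (ent (\row_(l < q) v (nat_of_ord l))%R) = Qf q S v.
  apply: rsum_ext => i Hi; apply: rsum_ext => l Hl; by rewrite !ent_row.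
pose C := [set M : 'rV[R]_q | P (ent M)].
pose f := fun M : 'rV[R]_q => Qf q S (ent M).
have C0 : C !=set0 by exists (\row_(l < q) v0 (nat_of_ord l))%R; apply: rowP.
have fc : continuous f.
  apply: rsum_cont => i; apply: rsum_cont => l.
  apply: mul_cont; last exact: ent_cont.
  apply: mul_cont; last exact: ent_cont.
  exact: cst_continuous.
have Ccl : closed C.
  have -> : C = (fun M => dotv q (ent M) (ent M)) @^-1` [set x | x = 1] `&`
     \bigcap_(j in [set j | (j < k)%coq_nat]) (fun M => dotv q (ent M) (w j)) @^-1` [set x | x = 0].
    apply/seteqP; split => M /=.
      by move=> [H1 H2]; split => // j Hj; apply: H2.
    by move=> [H1 H2]; split => // j Hj; apply: H2.
  apply: closedI.
    apply: preimage_closed; last exact: closed_eq.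
    move=> M _; apply: rsum_cont => i; apply: mul_cont; exact: ent_cont.
  apply: closed_bigI => j _.
  apply: preimage_closed; last exact: closed_eq.
  move=> M _; apply: rsum_cont => i; apply: mul_cont; [exact: ent_cont|exact: cst_continuous].
have Ccp : compact C.
  have Bc := (@rV_compact _ q _ (fun=> @segment_compact _ (-1 : R)%R (1 : R)%R)).
  apply: (subclosed_compact Ccl Bc).
  move=> M [H1 _] i /=.
  have := sq_le_rsum (ent M) q i (ltP (ltn_ord i)); rewrite /dotv in H1; rewrite H1.
  have -> : ent M i = M ord0 i.
    rewrite /ent; case: Compare_dec.lt_dec => H; last by case: H; apply/ltP.
    by congr (M _ _); apply: val_inj.
  move=> Hle; rewrite in_itv /=; move: Hle; move: (M ord0 i) => x Hle.
  have Hl2 : Rle (Rmult x x) (IZR 1) := Hle.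
  apply/andP; split; apply/RleP; [change (-1)%R with (Ropp (IZR 1)); nra|change (1%R) with (IZR 1); nra].
have [c Cc Hmax] := compact_EVT_max C0 Ccp (continuous_subspaceT fc).
exists (ent c); split.
  by move: Cc; rewrite inE.
move=> v Pv.
rewrite -(Qrow v).
have := Hmax (\row_(l < q) v (nat_of_ord l))%R.
rewrite inE => /(_ (rowP v Pv)) /RleP.
by [].
Qed.
End Br2.



Lemma rsum_plus (f g : nat -> R) n : rsum (fun i => f i + g i) n = rsum f n + rsum g n.
Proof. induction n; simpl; [ring|rewrite IHn; ring]. Qed.

Lemma rsum_minus (f g : nat -> R) n : rsum (fun i => f i - g i) n = rsum f n - rsum g n.
Proof. induction n; simpl; [ring|rewrite IHn; ring]. Qed.

Lemma rsum_scal (c : R) (f : nat -> R) n : rsum (fun i => c * f i) n = c * rsum f n.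
Proof. induction n; simpl; [ring|rewrite IHn; ring]. Qed.

Lemma rsum_scal_r (c : R) (f : nat -> R) n : rsum (fun i => f i * c) n = rsum f n * c.
Proof. induction n; simpl; [ring|rewrite IHn; ring]. Qed.

Lemma rsum_zero (f : nat -> R) n : (forall i, (i < n)%nat -> f i = 0) -> rsum f n = 0.
Proof.
intros H. transitivity (rsum (fun _ => 0) n); [apply rsum_ext; auto|].
induction n; simpl; [ring|rewrite IHn; [ring|intros; apply H; lia]].
Qed.

Lemma rsum_le (f g : nat -> R) n : (forall i, (i < n)%nat -> f i <= g i) -> rsum f n <= rsum g n.
Proof.
induction n; intros H; simpl; [lra|].
pose proof (H n ltac:(lia)). pose proof (IHn ltac:(intros; apply H; lia)). lra.
Qed.

Lemma rsum_nonneg (f : nat -> R) n : (forall i, (i < n)%nat -> 0 <= f i) -> 0 <= rsum f n.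
Proof.
intros H. replace 0 with (rsum (fun _ => 0) n).
- apply rsum_le; auto.
- apply rsum_zero; auto.
Qed.

Lemma rsum_swap (f : nat -> nat -> R) n m :
  rsum (fun i => rsum (fun j => f i j) m) n = rsum (fun j => rsum (fun i => f i j) n) m.
Proof.
induction n; simpl.
- symmetry; apply rsum_zero; auto.
- rewrite IHn. rewrite <- rsum_plus. reflexivity.
Qed.

Lemma rsum_delta (f : nat -> R) m l : (l < m)%nat ->
  rsum (fun k => (if Nat.eq_dec k l then 1 else 0) * f k) m = f l.
Proof.
induction m; intros H; [lia|simpl].
destruct (Nat.eq_dec m l) as [->|Hne].
- rewrite rsum_zero; [ring|]. intros i Hi. destruct (Nat.eq_dec i l); [lia|ring].
- rewrite IHm by lia. ring.
Qed.

Lemma rsum_delta_l (f : nat -> R) m l : (l < m)%nat ->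
  rsum (fun k => (if Nat.eq_dec l k then 1 else 0) * f k) m = f l.
Proof.
intros H. rewrite <- (rsum_delta f m l H). apply rsum_ext. intros i _.
destruct (Nat.eq_dec l i), (Nat.eq_dec i l); try lia; reflexivity.
Qed.

Lemma rsum_split (f : nat -> R) a b : rsum f (a + b) = rsum f a + rsum (fun i => f (a + i)%nat) b.
Proof.
induction b; simpl.
- rewrite Nat.add_0_r. ring.
- rewrite Nat.add_succ_r. simpl. rewrite IHb. ring.
Qed.

Lemma rsum_sq_zero (v : nat -> R) n : rsum (fun i => v i * v i) n <= 0 -> forall i, (i < n)%nat -> v i = 0.
Proof.
intros H i Hi. pose proof (sq_le_rsum v n i Hi). nra.
Qed.

Lemma rsum_mod_div (f : nat -> R) m n : (0 < m)%nat ->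
  rsum f (m * n) = rsum (fun j => rsum (fun i => f (i + m * j)%nat) m) n.
Proof.
intros Hm. induction n; simpl.
- rewrite Nat.mul_0_r. reflexivity.
- replace (m * S n)%nat with (m * n + m)%nat by lia.
  rewrite rsum_split, IHn. f_equal. apply rsum_ext. intros i _. f_equal. lia.
Qed.

Definition svdm (r : nat) (U : nat -> nat -> R) (d : nat -> R) (V : nat -> nat -> R) : nat -> nat -> R :=
  fun i j => rsum (fun k => U i k * d k * V j k) r.
Definition frob (m n : nat) (X Y : nat -> nat -> R) : R :=
  rsum (fun i => rsum (fun j => X i j * Y i j) n) m.
Definition orthc (q r : nat) (U : nat -> nat -> R) : Prop :=
  forall k l, (k < r)%nat -> (l < r)%nat ->
    rsum (fun i => U i k * U i l) q = (if Nat.eq_dec k l then 1 else 0).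

Lemma rsum_mult (f g : nat -> R) n m :
  rsum f n * rsum g m = rsum (fun k => rsum (fun l => f k * g l) m) n.
Proof.
rewrite <- rsum_scal_r. apply rsum_ext. intros k _. rewrite <- rsum_scal. reflexivity.
Qed.

Lemma frob_expand (m n r : nat) U1 d1 V1 U2 d2 V2 :
  frob m n (svdm r U1 d1 V1) (svdm r U2 d2 V2) =
  rsum (fun k => rsum (fun l => d1 k * d2 l * rsum (fun i => U1 i k * U2 i l) m
                                  * rsum (fun j => V1 j k * V2 j l) n) r) r.
Proof.
unfold frob, svdm.
transitivity (rsum (fun i => rsum (fun j => rsum (fun k => rsum (fun l =>
   U1 i k * d1 k * V1 j k * (U2 i l * d2 l * V2 j l)) r) r) n) m).
{ apply rsum_ext; intros i _; apply rsum_ext; intros j _. apply rsum_mult. }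
transitivity (rsum (fun i => rsum (fun k => rsum (fun j => rsum (fun l =>
   U1 i k * d1 k * V1 j k * (U2 i l * d2 l * V2 j l)) r) n) r) m).
{ apply rsum_ext; intros i _. apply rsum_swap. }
rewrite rsum_swap.
transitivity (rsum (fun k => rsum (fun i => rsum (fun l => rsum (fun j =>
   U1 i k * d1 k * V1 j k * (U2 i l * d2 l * V2 j l)) n) r) m) r).
{ apply rsum_ext; intros k _; apply rsum_ext; intros i _. apply rsum_swap. }
apply rsum_ext; intros k _.
rewrite rsum_swap. apply rsum_ext; intros l _.
match goal with |- _ = ?A * ?B * ?C * ?D => replace (A * B * C * D) with ((A * B) * (C * D)) by ring end.
rewrite rsum_mult, <- rsum_scal.
apply rsum_ext; intros i _. rewrite <- rsum_scal.
apply rsum_ext; intros j _. ring.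
Qed.

Lemma frob_svd_same (m n : nat) U d d' V :
  orthc m m U -> orthc n m V ->
  frob m n (svdm m U d V) (svdm m U d' V) = rsum (fun k => d k * d' k) m.
Proof.
intros HU HV. rewrite frob_expand. apply rsum_ext; intros k Hk.
rewrite (rsum_ext _ (fun l => (if Nat.eq_dec k l then 1 else 0) * (d k * d' k))).
- apply rsum_delta_l; auto.
- intros l Hl. rewrite HU, HV by auto. destruct (Nat.eq_dec k l); [subst; ring|ring].
Qed.

Lemma bessel (q r : nat) (E : nat -> nat -> R) (x : nat -> R) :
  orthc q r E ->
  rsum (fun l => rsum (fun i => x i * E i l) q * rsum (fun i => x i * E i l) q) r
  <= rsum (fun i => x i * x i) q.
Proof.
intros HE. set (cf := fun l => rsum (fun i => x i * E i l) q).
assert (H0 : 0 <= rsum (fun i => (x i - rsum (fun l => cf l * E i l) r) * (x i - rsum (fun l => cf l * E i l) r)) q).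
{ apply rsum_nonneg; intros; apply Rle_0_sqr. }
assert (E1 : rsum (fun i => (x i - rsum (fun l => cf l * E i l) r) * (x i - rsum (fun l => cf l * E i l) r)) q
  = rsum (fun i => x i * x i) q - 2 * rsum (fun l => cf l * cf l) r
    + rsum (fun l => rsum (fun l' => cf l * cf l' * rsum (fun i => E i l * E i l') q) r) r).
{ transitivity (rsum (fun i => x i * x i - 2 * rsum (fun l => cf l * (x i * E i l)) r
     + rsum (fun l => rsum (fun l' => cf l * cf l' * (E i l * E i l')) r) r) q).
  { apply rsum_ext; intros i _.
    assert (H : rsum (fun l => cf l * (x i * E i l)) r = x i * rsum (fun l => cf l * E i l) r).
    { rewrite <- rsum_scal. apply rsum_ext; intros; ring. }
    rewrite H.
    assert (H1 : rsum (fun l => cf l * E i l) r * rsum (fun l => cf l * E i l) r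
         = rsum (fun l => rsum (fun l' => cf l * cf l' * (E i l * E i l')) r) r).
    { rewrite rsum_mult. apply rsum_ext; intros; apply rsum_ext; intros; ring. }
    rewrite <- H1. ring. }
  rewrite rsum_plus, rsum_minus.
  assert (A1 : rsum (fun i => 2 * rsum (fun l => cf l * (x i * E i l)) r) q = 2 * rsum (fun l => cf l * cf l) r).
  { rewrite rsum_scal. f_equal. rewrite rsum_swap. apply rsum_ext; intros l _.
    unfold cf at 3. rewrite <- rsum_scal. reflexivity. }
  assert (A2 : rsum (fun i => rsum (fun l => rsum (fun l' => cf l * cf l' * (E i l * E i l')) r) r) q
     = rsum (fun l => rsum (fun l' => cf l * cf l' * rsum (fun i => E i l * E i l') q) r) r).
  { rewrite rsum_swap. apply rsum_ext; intros l _. rewrite rsum_swap. apply rsum_ext; intros l' _.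
    rewrite <- rsum_scal. reflexivity. }
  rewrite A1, A2. ring. }
assert (E2 : rsum (fun l => rsum (fun l' => cf l * cf l' * rsum (fun i => E i l * E i l') q) r) r
           = rsum (fun l => cf l * cf l) r).
{ apply rsum_ext; intros l Hl.
  rewrite (rsum_ext _ (fun l' => (if Nat.eq_dec l l' then 1 else 0) * (cf l * cf l'))).
  - apply rsum_delta_l; auto.
  - intros l' Hl'. rewrite HE by auto. destruct (Nat.eq_dec l l'); ring. }
unfold cf in *. lra.
Qed.

Lemma rsum_S (f : nat -> R) n : rsum f (S n) = rsum f n + f n.
Proof. reflexivity. Qed.

Lemma abel (s x : nat -> R) N :
  rsum (fun k => s k * x k) N = rsum (fun p => (s p - s (S p)) * rsum x (S p)) N + s N * rsum x N.
Proof.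
induction N.
- simpl. ring.
- rewrite (rsum_S (fun k => s k * x k)), IHN, (rsum_S (fun p => (s p - s (S p)) * rsum x (S p))), (rsum_S x N). ring.
Qed.

Definition trunc (m : nat) (s : nat -> R) (k : nat) : R :=
  if Compare_dec.lt_dec k m then s k else 0.

Definition dec (m : nat) (s : nat -> R) : Prop :=
  (forall k, (S k < m)%nat -> s (S k) <= s k) /\ (forall k, (k < m)%nat -> 0 <= s k).

Lemma abel_t (s x : nat -> R) m :
  rsum (fun k => s k * x k) m = rsum (fun p => (trunc m s p - trunc m s (S p)) * rsum x (S p)) m.
Proof.
rewrite (rsum_ext _ (fun k => trunc m s k * x k)).
- rewrite abel. unfold trunc at 3. destruct (Compare_dec.lt_dec m m); [lia|ring].
- intros i Hi. unfold trunc. destruct (Compare_dec.lt_dec i m); [reflexivity|lia].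
Qed.

Lemma trunc_diff m s p : dec m s -> (p < m)%nat -> 0 <= trunc m s p - trunc m s (S p).
Proof.
intros [Hd Hn] Hp. unfold trunc.
destruct (Compare_dec.lt_dec p m); [|lia].
destruct (Compare_dec.lt_dec (S p) m).
- pose proof (Hd p l0). lra.
- pose proof (Hn p Hp). lra.
Qed.

Lemma rsum_const1 n : rsum (fun _ => 1) n = INR n.
Proof. induction n; [reflexivity|]. rewrite rsum_S, IHn, (S_INR n). ring. Qed.

Lemma rsum_mono_n (f : nat -> R) n1 n2 : (n1 <= n2)%nat -> (forall i, (i < n2)%nat -> 0 <= f i) ->
  rsum f n1 <= rsum f n2.
Proof.
intros Hle Hf. induction n2.
- replace n1 with 0%nat by lia. lra.
- destruct (Nat.eq_dec n1 (S n2)) as [->|Hne]; [lra|].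
  simpl. pose proof (Hf n2 ltac:(lia)). pose proof (IHn2 ltac:(lia) ltac:(intros; apply Hf; lia)). lra.
Qed.

Definition box (M : nat -> nat -> R) (p r : nat) : R :=
  rsum (fun l => rsum (fun k => M k l) (S p)) (S r).

Lemma G_abel m (s t : nat -> R) (M : nat -> nat -> R) :
  rsum (fun k => rsum (fun l => s k * t l * M k l) m) m =
  rsum (fun p => (trunc m s p - trunc m s (S p)) *
     rsum (fun r => (trunc m t r - trunc m t (S r)) * box M p r) m) m.
Proof.
transitivity (rsum (fun k => s k * rsum (fun l => t l * M k l) m) m).
{ apply rsum_ext; intros k _. rewrite <- rsum_scal. apply rsum_ext; intros; ring. }
rewrite abel_t. apply rsum_ext; intros p _. f_equal.
rewrite rsum_swap.
transitivity (rsum (fun l => t l * rsum (fun k => M k l) (S p)) m).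
{ apply rsum_ext; intros l _. rewrite <- rsum_scal. reflexivity. }
rewrite abel_t. reflexivity.
Qed.

Definition idm (k l : nat) : R := if Nat.eq_dec k l then 1 else 0.

Lemma box_id p r : box idm p r = INR (Nat.min (S r) (S p)).
Proof.
unfold box.
rewrite (rsum_ext _ (fun l => if Compare_dec.lt_dec l (S p) then 1 else 0)).
- generalize (S p) as P. intros P. generalize (S r) as R0. intros R0. induction R0 as [|R IH].
  + reflexivity.
  + rewrite rsum_S, IH. destruct (Compare_dec.lt_dec R P).
    * replace (Nat.min (S R) P) with (S (Nat.min R P)) by lia. rewrite (S_INR (Nat.min R P)). ring.
    * replace (Nat.min (S R) P) with (Nat.min R P) by lia. ring.
- intros l _. destruct (Compare_dec.lt_dec l (S p)).
  + unfold idm. rewrite (rsum_ext _ (fun k => (if Nat.eq_dec k l then 1 else 0) * 1)).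
    * apply rsum_delta; auto.
    * intros; ring.
  + apply rsum_zero. intros k Hk. unfold idm. destruct (Nat.eq_dec k l); [lia|reflexivity].
Qed.

Lemma rearr m (s t : nat -> R) (W : nat -> nat -> R) :
  dec m s -> dec m t ->
  (forall k l, (k < m)%nat -> (l < m)%nat -> 0 <= W k l) ->
  (forall k, (k < m)%nat -> rsum (fun l => W k l) m <= 1) ->
  (forall l, (l < m)%nat -> rsum (fun k => W k l) m <= 1) ->
  rsum (fun k => rsum (fun l => s k * t l * W k l) m) m <= rsum (fun k => s k * t k) m.
Proof.
intros Hs Ht HW Hr Hc.
assert (Eid : rsum (fun k => s k * t k) m = rsum (fun k => rsum (fun l => s k * t l * idm k l) m) m).
{ apply rsum_ext; intros k Hk. unfold idm.
  rewrite (rsum_ext _ (fun l => (if Nat.eq_dec k l then 1 else 0) * (s k * t l))).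
  - rewrite rsum_delta_l; auto.
  - intros; ring. }
rewrite Eid, !G_abel.
apply rsum_le; intros p Hp. apply Rmult_le_compat_l; [apply trunc_diff; auto|].
apply rsum_le; intros r Hr'. apply Rmult_le_compat_l; [apply trunc_diff; auto|].
rewrite box_id.
assert (B1 : box W p r <= INR (S p)).
{ unfold box. rewrite rsum_swap. rewrite <- rsum_const1. apply rsum_le; intros k Hk.
  apply Rle_trans with (rsum (fun l => W k l) m); [|apply Hr; lia].
  apply rsum_mono_n; [lia|]. intros; apply HW; lia. }
assert (B2 : box W p r <= INR (S r)).
{ unfold box. rewrite <- rsum_const1. apply rsum_le; intros l Hl.
  apply Rle_trans with (rsum (fun k => W k l) m); [|apply Hc; lia].
  apply rsum_mono_n; [lia|]. intros; apply HW; lia. }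
destruct (Nat.le_ge_cases (S r) (S p)).
- rewrite Nat.min_l by auto. auto.
- rewrite Nat.min_r by auto. auto.
Qed.

Lemma von_neumann m n U1 s1 V1 U2 s2 V2 :
  orthc m m U1 -> orthc n m V1 -> orthc m m U2 -> orthc n m V2 -> dec m s1 -> dec m s2 ->
  frob m n (svdm m U1 s1 V1) (svdm m U2 s2 V2) <= rsum (fun k => s1 k * s2 k) m.
Proof.
intros HU1 HV1 HU2 HV2 Hs1 Hs2. rewrite frob_expand.
set (A := fun k l => rsum (fun i => U1 i k * U2 i l) m).
set (B := fun k l => rsum (fun j => V1 j k * V2 j l) n).
apply Rle_trans with (rsum (fun k => rsum (fun l => s1 k * s2 l * ((A k l * A k l + B k l * B k l) / 2)) m) m).
{ apply rsum_le; intros k Hk; apply rsum_le; intros l Hl.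
  destruct Hs1 as [_ H1]; destruct Hs2 as [_ H2]. pose proof (H1 k Hk); pose proof (H2 l Hl).
  assert (0 <= s1 k * s2 l) by nra.
  assert (A k l * B k l <= (A k l * A k l + B k l * B k l) / 2).
  { pose proof (Rle_0_sqr (A k l - B k l)). unfold Rsqr in *. lra. }
  change (rsum (fun i => U1 i k * U2 i l) m) with (A k l).
  change (rsum (fun j => V1 j k * V2 j l) n) with (B k l).
  clearbody A B. nra. }
apply rearr; auto.
- intros k l _ _. pose proof (Rle_0_sqr (A k l)). pose proof (Rle_0_sqr (B k l)). unfold Rsqr in *. lra.
- intros k Hk.
  assert (HA : rsum (fun l => A k l * A k l) m <= 1).
  { pose proof (bessel m m U2 (fun i => U1 i k) HU2) as Hb. cbv beta in Hb. rewrite (HU1 k k Hk Hk) in Hb.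
    destruct (Nat.eq_dec k k); [|lia]. exact Hb. }
  assert (HB : rsum (fun l => B k l * B k l) m <= 1).
  { pose proof (bessel n m V2 (fun i => V1 i k) HV2) as Hb. cbv beta in Hb. rewrite (HV1 k k Hk Hk) in Hb.
    destruct (Nat.eq_dec k k); [|lia]. exact Hb. }
  rewrite (rsum_ext _ (fun l => / 2 * (A k l * A k l) + / 2 * (B k l * B k l))) by (intros; field).
  rewrite rsum_plus, !rsum_scal. lra.
- intros l Hl.
  assert (HA : rsum (fun k => A k l * A k l) m <= 1).
  { pose proof (bessel m m U1 (fun i => U2 i l) HU1) as Hb. cbv beta in Hb. rewrite (HU2 l l Hl Hl) in Hb.
    destruct (Nat.eq_dec l l); [|lia].
    eapply Rle_trans; [|exact Hb]. right. apply rsum_ext; intros k _. unfold A.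
    rewrite (rsum_ext (fun i => U1 i k * U2 i l) (fun i => U2 i l * U1 i k)) by (intros; ring). reflexivity. }
  assert (HB : rsum (fun k => B k l * B k l) m <= 1).
  { pose proof (bessel n m V1 (fun i => V2 i l) HV1) as Hb. cbv beta in Hb. rewrite (HV2 l l Hl Hl) in Hb.
    destruct (Nat.eq_dec l l); [|lia].
    eapply Rle_trans; [|exact Hb]. right. apply rsum_ext; intros k _. unfold B.
    rewrite (rsum_ext (fun i => V1 i k * V2 i l) (fun i => V2 i l * V1 i k)) by (intros; ring). reflexivity. }
  rewrite (rsum_ext _ (fun k => / 2 * (A k l * A k l) + / 2 * (B k l * B k l))) by (intros; field).
  rewrite rsum_plus, !rsum_scal. lra.
Qed.

Lemma frob_ext m n X X' Y Y' :
  (forall i j, (i < m)%nat -> (j < n)%nat -> X i j = X' i j) ->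
  (forall i j, (i < m)%nat -> (j < n)%nat -> Y i j = Y' i j) ->
  frob m n X Y = frob m n X' Y'.
Proof.
intros HX HY. unfold frob. apply rsum_ext; intros i Hi; apply rsum_ext; intros j Hj.
rewrite HX, HY by auto. reflexivity.
Qed.

Lemma svd_orthU m n Y U s V : is_svd m n Y U s V -> orthc m m U.
Proof. intros [H _]. exact H. Qed.
Lemma svd_orthV m n Y U s V : is_svd m n Y U s V -> orthc n m V.
Proof. intros [_ [H _]]. exact H. Qed.
Lemma svd_dec m n Y U s V : is_svd m n Y U s V -> dec m s.
Proof. intros [_ [_ [H1 [H2 _]]]]. split; auto. Qed.
Lemma svd_eq m n Y U s V : is_svd m n Y U s V ->
  forall i j, (i < m)%nat -> (j < n)%nat -> Y i j = svdm m U s V i j.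
Proof. intros [_ [_ [_ [_ H]]]]. exact H. Qed.

Lemma svd_unique m n Y U1 s1 V1 U2 s2 V2 :
  is_svd m n Y U1 s1 V1 -> is_svd m n Y U2 s2 V2 -> forall k, (k < m)%nat -> s1 k = s2 k.
Proof.
intros H1 H2.
pose proof (von_neumann m n U1 s1 V1 U2 s2 V2 (svd_orthU _ _ _ _ _ _ H1) (svd_orthV _ _ _ _ _ _ H1)
  (svd_orthU _ _ _ _ _ _ H2) (svd_orthV _ _ _ _ _ _ H2) (svd_dec _ _ _ _ _ _ H1) (svd_dec _ _ _ _ _ _ H2)) as HvN.
pose proof (frob_svd_same m n U1 s1 s1 V1 (svd_orthU _ _ _ _ _ _ H1) (svd_orthV _ _ _ _ _ _ H1)) as E1.
pose proof (frob_svd_same m n U2 s2 s2 V2 (svd_orthU _ _ _ _ _ _ H2) (svd_orthV _ _ _ _ _ _ H2)) as E2.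
assert (F1 : frob m n (svdm m U1 s1 V1) (svdm m U2 s2 V2) = frob m n Y Y).
{ apply frob_ext; intros; symmetry; [eapply svd_eq; eauto|eapply svd_eq; eauto]. }
assert (F2 : frob m n (svdm m U1 s1 V1) (svdm m U1 s1 V1) = frob m n Y Y).
{ apply frob_ext; intros; symmetry; eapply svd_eq; eauto. }
assert (F3 : frob m n (svdm m U2 s2 V2) (svdm m U2 s2 V2) = frob m n Y Y).
{ apply frob_ext; intros; symmetry; eapply svd_eq; eauto. }
assert (Hz : rsum (fun k => (s1 k - s2 k) * (s1 k - s2 k)) m <= 0).
{ rewrite (rsum_ext _ (fun k => s1 k * s1 k + s2 k * s2 k - 2 * (s1 k * s2 k))) by (intros; ring).
  rewrite rsum_minus, rsum_plus, rsum_scal. lra. }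
intros k Hk. pose proof (rsum_sq_zero (fun k => s1 k - s2 k) m Hz k Hk). simpl in H. lra.
Qed.

Lemma singvals_spec m n X : (exists U s V, is_svd m n X U s V) ->
  exists U V, is_svd m n X U (singvals m n X) V.
Proof.
intros [U [s [V H]]]. unfold singvals.
apply (epsilon_spec (inhabits (fun _ : nat => 0)) (fun s => exists U V, is_svd m n X U s V)).
exists s, U, V. exact H.
Qed.

Lemma count_all (s : nat -> R) k : (forall i, (i < k)%nat -> s i <> 0) -> count_nz s k = k.
Proof.
induction k; intros H; simpl; [reflexivity|].
rewrite IHk by (intros; apply H; lia).
destruct (Req_EM_T (s k) 0); [exfalso; apply (H k); auto|lia].
Qed.

Lemma rsum_count (f : R -> R) (s : nat -> R) m : f 0 = 0 -> dec m s ->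
  rsum (fun i => f (s i)) (count_nz s m) = rsum (fun i => f (s i)) m.
Proof.
intros Hf. induction m; intros [Hd Hn]; simpl; [reflexivity|].
destruct (Req_EM_T (s m) 0) as [E|E].
- rewrite Nat.add_0_r, E, Hf, Rplus_0_r. apply IHm. split; intros; [apply Hd|apply Hn]; lia.
- assert (Hall : forall i, (i < S m)%nat -> s i <> 0).
  { intros i Hi. assert (s m <= s i).
    { clear -Hd Hi. induction m as [|m' IH].
      - replace i with 0%nat by lia. lra.
      - destruct (Nat.eq_dec i (S m')) as [->|Hne]; [lra|].
        pose proof (Hd m' ltac:(lia)). assert (s m' <= s i) by (apply IH; intros; [apply Hd; lia|lia]). lra. }
    pose proof (Hn m ltac:(lia)). lra. }
  rewrite count_all by (intros; apply Hall; lia). rewrite Nat.add_1_r. reflexivity.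
Qed.

Lemma Tfun_eq a m n X : dec m (singvals m n X) ->
  Tfun a m n X = rsum (fun i => rho a (singvals m n X i)) m.
Proof.
intros H. unfold Tfun, rankm.
apply (rsum_count (rho a) (singvals m n X) m); [unfold rho, Rdiv; ring|auto].
Qed.

Definition Sv (q : nat) (Sm : nat -> nat -> R) (u : nat -> R) : nat -> R :=
  fun i => rsum (fun l => Sm i l * u l) q.
Definition Bf (q : nat) (Sm : nat -> nat -> R) (u v : nat -> R) : R :=
  rsum (fun i => rsum (fun l => Sm i l * u i * v l) q) q.

Lemma Bf_Sv q Sm u v : Bf q Sm u v = dotv q u (Sv q Sm v).
Proof.
unfold Bf, dotv, Sv. apply rsum_ext; intros i _. rewrite <- rsum_scal.
apply rsum_ext; intros; ring.
Qed.

Lemma Bf_sym q Sm u v : (forall i l, Sm i l = Sm l i) -> Bf q Sm u v = Bf q Sm v u.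
Proof.
intros HS. unfold Bf. rewrite rsum_swap. apply rsum_ext; intros; apply rsum_ext; intros.
rewrite HS. ring.
Qed.

Lemma Qf_Bf q Sm u : Qf q Sm u = Bf q Sm u u.
Proof. reflexivity. Qed.

Lemma Bf_lin_r q Sm u v w (t : R) : Bf q Sm u (fun i => v i + t * w i) = Bf q Sm u v + t * Bf q Sm u w.
Proof.
unfold Bf. rewrite <- rsum_scal, <- rsum_plus. apply rsum_ext; intros.
rewrite <- rsum_scal, <- rsum_plus. apply rsum_ext; intros. ring.
Qed.

Lemma Bf_lin_l q Sm u v w (t : R) : Bf q Sm (fun i => v i + t * w i) u = Bf q Sm v u + t * Bf q Sm w u.
Proof.
unfold Bf. rewrite <- rsum_scal, <- rsum_plus. apply rsum_ext; intros.
rewrite <- rsum_scal, <- rsum_plus. apply rsum_ext; intros. ring.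
Qed.

Lemma Bf_scal_l q Sm u v (t : R) : Bf q Sm (fun i => t * u i) v = t * Bf q Sm u v.
Proof.
unfold Bf. rewrite <- rsum_scal. apply rsum_ext; intros.
rewrite <- rsum_scal. apply rsum_ext; intros. ring.
Qed.

Lemma Bf_scal_r q Sm u v (t : R) : Bf q Sm u (fun i => t * v i) = t * Bf q Sm u v.
Proof.
unfold Bf. rewrite <- rsum_scal. apply rsum_ext; intros.
rewrite <- rsum_scal. apply rsum_ext; intros. ring.
Qed.

Lemma dotv_sym q u v : dotv q u v = dotv q v u.
Proof. unfold dotv. apply rsum_ext; intros; ring. Qed.

Lemma dotv_lin_l q u v w (t : R) : dotv q (fun i => v i + t * w i) u = dotv q v u + t * dotv q w u.
Proof. unfold dotv. rewrite <- rsum_scal, <- rsum_plus. apply rsum_ext; intros; ring. Qed.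

Lemma dotv_scal_l q u v (t : R) : dotv q (fun i => t * u i) v = t * dotv q u v.
Proof. unfold dotv. rewrite <- rsum_scal. apply rsum_ext; intros; ring. Qed.

Lemma dotv_ext q u u' v v' : (forall i, (i < q)%nat -> u i = u' i) -> (forall i, (i < q)%nat -> v i = v' i) ->
  dotv q u v = dotv q u' v'.
Proof. intros Hu Hv. unfold dotv. apply rsum_ext; intros. rewrite Hu, Hv by auto. reflexivity. Qed.

Lemma dotv_nonneg q u : 0 <= dotv q u u.
Proof. unfold dotv. apply rsum_nonneg; intros. apply Rle_0_sqr. Qed.

Lemma quad_zero (B C : R) : (forall t, 2 * t * B + t * t * C <= 0) -> B = 0.
Proof.
intros H. remember (Rabs C + 1) as D eqn:HDd.
assert (HD : 0 < D) by (pose proof (Rabs_pos C); lra).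
assert (H2 : 0 < 2 * D + C) by (pose proof (Rle_abs (- C)); rewrite Rabs_Ropp in *; lra).
pose proof (H (B / D)) as H1.
assert (E : 2 * (B / D) * B + B / D * (B / D) * C = B * B * (2 * D + C) / (D * D)) by (field; lra).
rewrite E in H1.
assert (B * B * (2 * D + C) <= 0).
{ apply Rmult_le_reg_r with (r := / (D * D)).
  - apply Rinv_0_lt_compat; nra.
  - rewrite Rmult_0_l. exact H1. }
assert (B * B <= 0) by nra. nra.
Qed.


Definition spec_inv (q : nat) (Sm : nat -> nat -> R) (K : nat) (u : nat -> nat -> R) (lam : nat -> R) : Prop :=
  (forall k l, (k < K)%nat -> (l < K)%nat -> dotv q (u k) (u l) = delta k l) /\
  (forall k i, (k < K)%nat -> (i < q)%nat -> Sv q Sm (u k) i = lam k * u k i) /\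
  (forall k, (S k < K)%nat -> lam (S k) <= lam k) /\
  (forall k, (k < K)%nat -> forall v, cons_ok q k u v -> Qf q Sm v <= lam k).

Lemma dotv_zero_l q u v : (forall i, (i < q)%nat -> u i = 0) -> dotv q u v = 0.
Proof. intros H. unfold dotv. apply rsum_zero. intros i Hi. rewrite H by auto. ring. Qed.

Lemma hom_max q Sm (K : nat) (u : nat -> nat -> R) (lam : R) :
  (forall v, cons_ok q K u v -> Qf q Sm v <= lam) ->
  forall v, (forall j, (j < K)%nat -> dotv q v (u j) = 0) -> Qf q Sm v <= lam * dotv q v v.
Proof.
intros Hmax v Hv. pose proof (dotv_nonneg q v) as Hn.
destruct (Req_dec (dotv q v v) 0) as [E|E].
- assert (Hz : forall i, (i < q)%nat -> v i = 0).
  { apply rsum_sq_zero. unfold dotv in E. lra. }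
  rewrite Qf_Bf, Bf_Sv, dotv_zero_l by auto. rewrite E. lra.
- set (N := dotv q v v) in *. assert (HN : 0 < N) by lra.
  pose proof (sqrt_lt_R0 N HN) as Hs. pose proof (sqrt_sqrt N ltac:(lra)) as Hss.
  set (c := / sqrt N).
  assert (Hc : c * c * N = 1).
  { unfold c. rewrite <- Hss at 3. field. lra. }
  assert (Hok : cons_ok q K u (fun i => c * v i)).
  { split.
    - rewrite dotv_scal_l, dotv_sym, dotv_scal_l. fold N. lra.
    - intros j Hj. rewrite dotv_scal_l, Hv by auto. ring. }
  pose proof (Hmax _ Hok) as H1.
  rewrite Qf_Bf, Bf_scal_l, Bf_scal_r, <- Qf_Bf in H1.
  assert (Hcpos : 0 < c * c) by (unfold c; pose proof (Rinv_0_lt_compat _ Hs); nra).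
  clearbody c N.
  apply Rmult_le_reg_l with (r := c * c); [lra|].
  replace (c * c * (lam * N)) with (lam * (c * c * N)) by ring. rewrite Hc. lra.
Qed.

Lemma lagrange q Sm (K : nat) (u : nat -> nat -> R) (uK : nat -> R) :
  (forall i l, Sm i l = Sm l i) ->
  cons_ok q K u uK ->
  (forall v, cons_ok q K u v -> Qf q Sm v <= Qf q Sm uK) ->
  forall v, (forall j, (j < K)%nat -> dotv q v (u j) = 0) -> dotv q v uK = 0 ->
  Bf q Sm uK v = 0.
Proof.
intros HS [Hu1 Hu2] Hmax v Hv Hvu.
pose proof (hom_max q Sm K u (Qf q Sm uK) Hmax) as Hh.
apply (quad_zero _ (Qf q Sm v - Qf q Sm uK * dotv q v v)). intros t.
set (w := fun i => uK i + t * v i).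
assert (Hw : forall j, (j < K)%nat -> dotv q w (u j) = 0).
{ intros j Hj. unfold w. rewrite dotv_lin_l, Hu2, Hv by auto. ring. }
pose proof (Hh w Hw) as H1. unfold w in H1.
rewrite Qf_Bf, Bf_lin_l, !Bf_lin_r in H1.
rewrite dotv_lin_l, !(dotv_sym q _ (fun i => uK i + t * v i)), !dotv_lin_l in H1.
rewrite (Bf_sym q Sm v uK HS) in H1. rewrite <- !Qf_Bf in H1.
rewrite (dotv_sym q uK v), Hvu, Hu1 in H1.
nra.
Qed.

Lemma eigen_step q Sm (K : nat) (u : nat -> nat -> R) (lam : nat -> R) (uK : nat -> R) :
  (forall i l, Sm i l = Sm l i) ->
  (forall k i, (k < K)%nat -> (i < q)%nat -> Sv q Sm (u k) i = lam k * u k i) ->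
  cons_ok q K u uK ->
  (forall v, cons_ok q K u v -> Qf q Sm v <= Qf q Sm uK) ->
  forall i, (i < q)%nat -> Sv q Sm uK i = Qf q Sm uK * uK i.
Proof.
intros HS Heig Hok Hmax.
set (lK := Qf q Sm uK).
set (r := fun i => Sv q Sm uK i + (- lK) * uK i).
destruct Hok as [Hu1 Hu2].
assert (Hr1 : forall j, (j < K)%nat -> dotv q r (u j) = 0).
{ intros j Hj. unfold r. rewrite dotv_lin_l, Hu2 by auto.
  rewrite dotv_sym, <- Bf_Sv, Bf_sym by auto. rewrite Bf_Sv.
  rewrite (dotv_ext q uK uK (Sv q Sm (u j)) (fun i => lam j * u j i)) by (auto; intros; apply Heig; auto).
  rewrite dotv_sym, dotv_scal_l, dotv_sym, Hu2 by auto. ring. }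
assert (Hr2 : dotv q r uK = 0).
{ unfold r. rewrite dotv_lin_l, Hu1, dotv_sym, <- Bf_Sv, <- Qf_Bf. fold lK. ring. }
pose proof (lagrange q Sm K u uK HS (conj Hu1 Hu2) Hmax r Hr1 Hr2) as HB.
assert (Hrr : dotv q r r = 0).
{ transitivity (dotv q r (Sv q Sm uK) + (- lK) * dotv q r uK).
  - unfold dotv. rewrite <- rsum_scal, <- rsum_plus. apply rsum_ext; intros. unfold r at 2. ring.
  - rewrite Hr2, <- Bf_Sv, Bf_sym, HB by auto. ring. }
intros i Hi. pose proof (rsum_sq_zero r q ltac:(unfold dotv in Hrr; lra) i Hi) as Hz.
unfold r in Hz. fold lK. lra.
Qed.

Lemma exists_unit_orth q K (u : nat -> nat -> R) : (K < q)%nat -> exists v, cons_ok q K u v.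
Proof.
intros HK. destruct (Br.ker_exists q K u HK) as [v' [[i [Hi Hnz]] Horth]].
set (N := dotv q v' v').
assert (HN : 0 < N).
{ unfold N, dotv. pose proof (sq_le_rsum v' q i Hi).
  assert (0 < v' i * v' i) by (apply Rsqr_pos_lt; auto). lra. }
pose proof (sqrt_lt_R0 N HN) as Hs. pose proof (sqrt_sqrt N ltac:(lra)) as Hss.
exists (fun l => / sqrt N * v' l). split.
- rewrite dotv_scal_l, dotv_sym, dotv_scal_l. fold N.
  clearbody N. rewrite <- Hss at 3. field. lra.
- intros j Hj. rewrite dotv_scal_l. unfold dotv. rewrite Horth by auto. ring.
Qed.

Lemma cons_ok_ext q k u u' v : (forall j, (j < k)%nat -> u j = u' j) -> cons_ok q k u v -> cons_ok q k u' v.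
Proof.
intros H [H1 H2]. split; auto. intros j Hj. rewrite <- H by auto. auto.
Qed.

Lemma cons_ok_weak q k k' u v : (k' <= k)%nat -> cons_ok q k u v -> cons_ok q k' u v.
Proof. intros H [H1 H2]. split; auto. intros j Hj. apply H2. lia. Qed.

Lemma spec_step q Sm K u lam : (forall i l, Sm i l = Sm l i) -> (K < q)%nat ->
  spec_inv q Sm K u lam -> exists u' lam', spec_inv q Sm (S K) u' lam'.
Proof.
intros HS HK [Ho [He [Hs Hm]]].
destruct (Br2.max_exists q K Sm u (exists_unit_orth q K u HK)) as [uK [Hok Hmax]].
pose proof (eigen_step q Sm K u lam uK HS He Hok Hmax) as HeK.
exists (fun k => if Nat.eq_dec k K then uK else u k).
exists (fun k => if Nat.eq_dec k K then Qf q Sm uK else lam k).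
assert (Hagree : forall k, (k <= K)%nat -> forall j, (j < k)%nat -> u j = (fun k0 => if Nat.eq_dec k0 K then uK else u k0) j).
{ intros k Hk j Hj. destruct (Nat.eq_dec j K); [lia|reflexivity]. }
split; [|split; [|split]].
- intros k l Hk Hl. unfold delta.
  destruct (Nat.eq_dec k K) as [->|Hk']; destruct (Nat.eq_dec l K) as [->|Hl'].
  + destruct Hok as [H1 _]. rewrite H1. destruct (Nat.eq_dec K K); [reflexivity|lia].
  + destruct Hok as [_ H2]. rewrite H2 by lia. destruct (Nat.eq_dec K l); [lia|reflexivity].
  + destruct Hok as [_ H2]. rewrite dotv_sym, H2 by lia. destruct (Nat.eq_dec k K); [lia|reflexivity].
  + apply Ho; lia.
- intros k i Hk Hi. destruct (Nat.eq_dec k K) as [->|Hk'].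
  + apply HeK; auto.
  + apply He; auto; lia.
- intros k Hk. destruct (Nat.eq_dec (S k) K) as [E|E]; destruct (Nat.eq_dec k K) as [E'|E']; try lia.
  + apply (Hm k ltac:(lia)). apply (cons_ok_weak q K); [lia|auto].
  + apply Hs; lia.
- intros k Hk v Hv. destruct (Nat.eq_dec k K) as [->|Hk'].
  + apply Hmax. apply (cons_ok_ext q K (fun k0 => if Nat.eq_dec k0 K then uK else u k0) u); [|exact Hv].
    intros j Hj. destruct (Nat.eq_dec j K); [lia|reflexivity].
  + apply Hm; [lia|]. apply (cons_ok_ext q k (fun k0 => if Nat.eq_dec k0 K then uK else u k0) u); [|exact Hv].
    intros j Hj. destruct (Nat.eq_dec j K); [lia|reflexivity].
Qed.

Lemma spec_all q Sm : (forall i l, Sm i l = Sm l i) ->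
  forall K, (K <= q)%nat -> exists u lam, spec_inv q Sm K u lam.
Proof.
intros HS K. induction K; intros HK.
- exists (fun _ _ => 0), (fun _ => 0). split; [|split; [|split]]; intros; lia.
- destruct (IHK ltac:(lia)) as [u [lam H]]. apply (spec_step q Sm K u lam HS); auto.
Qed.

Section Ex.
Variables (m n : nat) (X : nat -> nat -> R).
Hypothesis Hmn : (m <= n)%nat.

Definition SX : nat -> nat -> R := fun i l => rsum (fun j => X i j * X l j) n.

Lemma SX_sym : forall i l, SX i l = SX l i.
Proof. intros. unfold SX. apply rsum_ext; intros; ring. Qed.

Definition yv (u : nat -> nat -> R) (k : nat) : nat -> R := fun j => rsum (fun i => X i j * u k i) m.

Lemma yv_dot (u : nat -> nat -> R) k l :
  dotv n (yv u k) (yv u l) = dotv m (u k) (Sv m SX (u l)).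
Proof.
unfold dotv, yv, Sv, SX.
transitivity (rsum (fun j => rsum (fun i => rsum (fun i' => X i j * u k i * (X i' j * u l i')) m) m) n).
{ apply rsum_ext; intros j _. apply rsum_mult. }
rewrite rsum_swap. apply rsum_ext; intros i _.
rewrite rsum_swap. rewrite <- rsum_scal. apply rsum_ext; intros i' _.
rewrite <- rsum_scal_r, <- rsum_scal. apply rsum_ext; intros j _. ring.
Qed.

Lemma lam_chain (lam : nat -> R) : (forall k, (S k < m)%nat -> lam (S k) <= lam k) ->
  forall j k, (j <= k)%nat -> (k < m)%nat -> lam k <= lam j.
Proof.
intros H j k Hjk. induction Hjk; intros Hk; [lra|].
pose proof (H m0 Hk). pose proof (IHHjk ltac:(lia)). lra.
Qed.

Lemma svd_exists : exists U s V, is_svd m n X U s V.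
Proof.
destruct (spec_all m SX SX_sym m (le_n m)) as [u [lam [Ho [He [Hs Hm]]]]].
assert (Hy : forall k l, (k < m)%nat -> (l < m)%nat -> dotv n (yv u k) (yv u l) = lam l * delta k l).
{ intros k l Hk Hl. rewrite yv_dot.
  rewrite (dotv_ext m (u k) (u k) _ (fun i => lam l * u l i)) by (auto; intros; apply He; auto).
  rewrite dotv_sym, dotv_scal_l, dotv_sym, Ho by auto. reflexivity. }
assert (Hlam0 : forall k, (k < m)%nat -> 0 <= lam k).
{ intros k Hk. pose proof (Hy k k Hk Hk). unfold delta in H. destruct (Nat.eq_dec k k); [|lia].
  pose proof (dotv_nonneg n (yv u k)). lra. }
pose proof (lam_chain lam Hs) as Hch.
assert (HV : forall K, (K <= m)%nat -> exists v : nat -> nat -> R,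
   (forall k l, (k < K)%nat -> (l < K)%nat -> dotv n (v k) (v l) = delta k l) /\
   (forall k j, (k < K)%nat -> (j < n)%nat -> yv u k j = sqrt (lam k) * v k j)).
{ intros K. induction K as [|K IH]; intros HK.
  - exists (fun _ _ => 0). split; intros; lia.
  - destruct (IH ltac:(lia)) as [v [Hv1 Hv2]].
    destruct (Rlt_dec 0 (lam K)) as [Hpos|Hnpos].
    + set (vK := fun j => / sqrt (lam K) * yv u K j).
      pose proof (sqrt_lt_R0 _ Hpos) as HsK. pose proof (sqrt_sqrt (lam K) ltac:(lra)) as HssK.
      assert (Hvl : forall l, (l < K)%nat -> dotv n vK (v l) = 0).
      { intros l Hl. assert (Hpl : 0 < lam l) by (pose proof (Hch l K ltac:(lia) ltac:(lia)); lra).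
        pose proof (sqrt_lt_R0 _ Hpl) as Hsl.
        rewrite (dotv_ext n vK vK (v l) (fun j => / sqrt (lam l) * yv u l j)).
        - unfold vK. rewrite dotv_scal_l, dotv_sym, dotv_scal_l, dotv_sym, Hy by lia.
          unfold delta. destruct (Nat.eq_dec K l); [lia|ring].
        - auto.
        - intros j Hj. rewrite Hv2 by auto. field. lra. }
      exists (fun k => if Nat.eq_dec k K then vK else v k). split.
      * intros k l Hk Hl. destruct (Nat.eq_dec k K) as [->|Hk']; destruct (Nat.eq_dec l K) as [->|Hl'].
        -- unfold vK. rewrite dotv_scal_l, dotv_sym, dotv_scal_l, Hy by lia.
           unfold delta. destruct (Nat.eq_dec K K); [|lia].
           clear -HssK HsK. rewrite <- HssK at 3. field. lra.
        -- rewrite Hvl by lia. unfold delta. destruct (Nat.eq_dec K l); [lia|reflexivity].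
        -- rewrite dotv_sym, Hvl by lia. unfold delta. destruct (Nat.eq_dec k K); [lia|reflexivity].
        -- apply Hv1; lia.
      * intros k j Hk Hj. destruct (Nat.eq_dec k K) as [->|Hk'].
        -- unfold vK. field. lra.
        -- apply Hv2; auto; lia.
    + assert (HlK : lam K = 0) by (pose proof (Hlam0 K ltac:(lia)); lra).
      destruct (exists_unit_orth n K v ltac:(lia)) as [vK [HvK1 HvK2]].
      exists (fun k => if Nat.eq_dec k K then vK else v k). split.
      * intros k l Hk Hl. destruct (Nat.eq_dec k K) as [->|Hk']; destruct (Nat.eq_dec l K) as [->|Hl'].
        -- rewrite HvK1. unfold delta. destruct (Nat.eq_dec K K); [reflexivity|lia].
        -- rewrite HvK2 by lia. unfold delta. destruct (Nat.eq_dec K l); [lia|reflexivity].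
        -- rewrite dotv_sym, HvK2 by lia. unfold delta. destruct (Nat.eq_dec k K); [lia|reflexivity].
        -- apply Hv1; lia.
      * intros k j Hk Hj. destruct (Nat.eq_dec k K) as [->|Hk'].
        -- rewrite HlK, sqrt_0, Rmult_0_l.
           pose proof (Hy K K ltac:(lia) ltac:(lia)) as HyK. rewrite HlK, Rmult_0_l in HyK.
           apply (rsum_sq_zero (yv u K) n); [unfold dotv in HyK; lra|auto].
        -- apply Hv2; auto; lia. }
destruct (HV m (le_n m)) as [v [Hv1 Hv2]].
exists (fun i k => u k i), (fun k => sqrt (lam k)), (fun j k => v k j).
split; [|split; [|split; [|split]]].
- intros k l Hk Hl. apply Ho; auto.
- intros k l Hk Hl. apply Hv1; auto.
- intros k _. apply sqrt_pos.
- intros k Hk. apply sqrt_le_1_alt. apply Hs. auto.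
- intros i j Hi Hj.
  assert (Hrow : forall i i', (i < m)%nat -> (i' < m)%nat -> rsum (fun k => u k i * u k i') m = delta i i').
  { unfold delta. apply (Br.orth_sq m (fun i k => u k i)). intros k l Hk Hl. apply Ho; auto. }
  transitivity (rsum (fun k => u k i * yv u k j) m).
  + unfold yv. transitivity (rsum (fun i' => X i' j * delta i' i) m).
    * rewrite (rsum_ext _ (fun i' => (if Nat.eq_dec i' i then 1 else 0) * X i' j)).
      -- symmetry. apply (rsum_delta (fun i0 => X i0 j) m i). auto.
      -- intros i' _. unfold delta. ring.
    * symmetry. transitivity (rsum (fun k => rsum (fun i' => u k i * (X i' j * u k i')) m) m).
      { apply rsum_ext; intros. rewrite rsum_scal. reflexivity. }
      rewrite rsum_swap. apply rsum_ext; intros i' Hi'.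
      rewrite <- (Hrow i' i) by auto. rewrite <- rsum_scal. apply rsum_ext; intros; ring.
  + apply rsum_ext; intros k Hk. rewrite Hv2 by auto. ring.
Qed.
End Ex.

Lemma vecm_idx m n X i j : (i < m)%nat -> vecm m n X (i + m * j)%nat = X i j.
Proof.
intros Hi. unfold vecm.
replace (i + m * j)%nat with (i + j * m)%nat by lia.
rewrite Nat.Div0.mod_add, Nat.div_add by lia.
rewrite Nat.mod_small, Nat.div_small by lia. reflexivity.
Qed.

Lemma rsum_vec m n (F : R -> R) X : (0 < m)%nat ->
  rsum (fun k => F (vecm m n X k)) (m * n) = rsum (fun i => rsum (fun j => F (X i j)) n) m.
Proof.
intros Hm. rewrite rsum_mod_div by auto. rewrite rsum_swap.
apply rsum_ext; intros j Hj; apply rsum_ext; intros i Hi. rewrite vecm_idx by auto. reflexivity.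
Qed.

Lemma adjoint m n p A X y : (0 < m)%nat ->
  rsum (fun r => calA m n p A X r * y r) p = frob m n X (calA_adj m n p A y).
Proof.
intros Hm. unfold calA, matvec, frob, calA_adj.
transitivity (rsum (fun r => rsum (fun k => A r k * vecm m n X k * y r) (m * n)) p).
{ apply rsum_ext; intros. rewrite rsum_scal_r. reflexivity. }
rewrite rsum_swap. rewrite rsum_mod_div by auto. rewrite rsum_swap.
apply rsum_ext; intros i Hi. apply rsum_ext; intros j Hj.
rewrite <- rsum_scal. apply rsum_ext; intros r _. rewrite vecm_idx by auto. ring.
Qed.

Lemma matvec_scal p q A v (c : R) r : matvec p q A (fun k => c * v k) r = c * matvec p q A v r.
Proof. unfold matvec. rewrite <- rsum_scal. apply rsum_ext; intros; ring. Qed.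

Lemma spec_bound p q A normA v : is_spectral_norm p q A normA ->
  rsum (fun r => matvec p q A v r ^ 2) p <= normA ^ 2 * rsum (fun k => v k ^ 2) q.
Proof.
intros [Hub _].
remember (rsum (fun k => v k ^ 2) q) as N eqn:HNd.
assert (HN0 : 0 <= N) by (rewrite HNd; apply rsum_nonneg; intros; apply pow2_ge_0).
destruct (Req_dec N 0) as [E|E].
- assert (Hz : forall k, (k < q)%nat -> v k = 0).
  { apply rsum_sq_zero. rewrite HNd in E. rewrite (rsum_ext _ (fun k => v k ^ 2)) by (intros; ring). lra. }
  rewrite E, Rmult_0_r. right. apply rsum_zero. intros r _.
  unfold matvec. rewrite rsum_zero; [ring|]. intros k Hk. rewrite Hz by auto. ring.
- assert (HN : 0 < N) by lra.
  pose proof (sqrt_lt_R0 N HN) as Hs. pose proof (sqrt_sqrt N ltac:(lra)) as Hss.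
  assert (Hinv : / N = / sqrt N * / sqrt N) by (rewrite <- Rinv_mult, Hss; reflexivity).
  set (v' := fun k => / sqrt N * v k).
  assert (Hv' : vnorm q v' = 1).
  { unfold vnorm, v'. rewrite (rsum_ext _ (fun k => / N * v k ^ 2)).
    - rewrite rsum_scal, <- HNd. rewrite Rinv_l by lra. apply sqrt_1.
    - intros k _. rewrite Hinv. ring. }
  assert (Hin := Hub _ (ex_intro _ v' (conj Hv' eq_refl))).
  set (M := rsum (fun r => matvec p q A v r ^ 2) p) in *.
  assert (HM0 : 0 <= M) by (unfold M; apply rsum_nonneg; intros; apply pow2_ge_0).
  assert (EM : rsum (fun r => matvec p q A v' r ^ 2) p = M / N).
  { unfold M. unfold Rdiv. rewrite Rmult_comm, <- rsum_scal. apply rsum_ext; intros r _.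
    unfold v'. rewrite matvec_scal. rewrite Hinv. ring. }
  unfold vnorm in Hin. rewrite EM in Hin.
  assert (Hnorm : 0 <= normA) by (pose proof (sqrt_pos (M / N)); lra).
  assert (H2 : M / N <= normA ^ 2).
  { rewrite <- (sqrt_sqrt (M / N)) by (unfold Rdiv; apply Rmult_le_pos; [lra|left; apply Rinv_0_lt_compat; lra]).
    simpl. rewrite Rmult_1_r. apply Rmult_le_compat; auto using sqrt_pos. }
  clearbody M.
  apply Rmult_le_compat_r with (r := N) in H2; [|lra].
  replace (M / N * N) with M in H2 by (field; lra). lra.
Qed.

Definition fsc (L a w x : R) : R := / 2 * (x - w) ^ 2 + L * rho a x.

Lemma cos3 (t : R) : cos (3 * t) = 4 * cos t ^ 3 - 3 * cos t.
Proof.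
replace (3 * t) with (2 * t + t) by ring.
rewrite cos_plus, cos_2a_cos, sin_2a.
pose proof (sin2_cos2 t) as H. unfold Rsqr in H.
transitivity ((2 * cos t * cos t - 1) * cos t - 2 * cos t * (sin t * sin t)); [ring|].
replace (sin t * sin t) with (1 - cos t * cos t) by lra. ring.
Qed.

Lemma sqrt_sq_eq (c : R) : 0 <= c -> sqrt c * sqrt c = c.
Proof. intros; apply sqrt_sqrt; lra. Qed.

Section Sc.
Variables (L a : R).
Hypothesis (Ha : 0 < a) (HL : 0 < L).

Let c := L * (a + 1).

Lemma c_pos : 0 < c.
Proof. unfold c; nra. Qed.

Lemma case1_iff : L <= a ^ 2 / (2 * (a + 1)) <-> 2 * c <= a ^ 2.
Proof.
unfold c; split; intros H.
- apply Rmult_le_compat_r with (r := 2 * (a + 1)) in H; [|lra].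
  field_simplify in H; [lra|lra].
- apply Rmult_le_reg_r with (r := 2 * (a + 1)); [lra|].
  field_simplify; lra.
Qed.

Lemma thresh_pos : 0 < thresh L a.
Proof.
unfold thresh; destruct (Rle_dec L (a ^ 2 / (2 * (a + 1)))) as [H|H].
- apply Rdiv_lt_0_compat; nra.
- assert (H2 : a ^ 2 < 2 * L * (a + 1)).
  { apply Rnot_le_lt in H. pose proof (proj2 case1_iff). unfold c in *.
    destruct (Rle_dec (2 * (L * (a + 1))) (a ^ 2)); [pose proof (H0 r); lra|nra]. }
  assert (a < sqrt (2 * L * (a + 1))).
  { assert (Ea : sqrt (a ^ 2) = a) by (apply sqrt_pow2; lra). rewrite <- Ea at 1. apply sqrt_lt_1; nra. }
  lra.
Qed.

Definition qc (y z : R) : R := z ^ 3 - y * z ^ 2 + c * a.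

Lemma qc_largest (y z u : R) : 0 < y -> qc y z = 0 -> 2 * y <= 3 * z -> 0 <= u -> qc y u <= 0 -> u <= z.
Proof.
unfold qc; intros Hy Hz H3 Hu Hq.
destruct (Rle_dec u z) as [|Hn]; [auto|exfalso].
apply Rnot_le_lt in Hn.
assert (Hpos : (u - z) * (u * u + u * z + z * z - y * (u + z)) > 0).
{ apply Rmult_lt_0_compat; [lra|].
  assert (u + z > 4 * y / 3) by lra.
  assert (u * u + u * z + z * z >= 3 / 4 * ((u + z) * (u + z))) by nra.
  nra. }
assert (E : z ^ 3 - y * z ^ 2 + c * a + (u - z) * (u * u + u * z + z * z - y * (u + z)) = u ^ 3 - y * u ^ 2 + c * a) by ring.
lra.
Qed.

Lemma q_witness (w : R) : thresh L a < w ->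
  (2 * c <= a ^ 2 /\ qc (a + w) a <= 0) \/
  (a ^ 2 < 2 * c /\ qc (a + w) (sqrt (2 * c)) <= 0).
Proof.
intros Hw. pose proof c_pos as Hc. unfold thresh in Hw.
destruct (Rle_dec L (a ^ 2 / (2 * (a + 1)))) as [H|H].
- left. split; [apply case1_iff; auto|].
  unfold qc. replace (L * (a + 1) / a) with (c / a) in Hw by (unfold c; field; lra).
  assert (c < a * w).
  { apply Rmult_lt_compat_l with (r := a) in Hw; [|lra].
    replace (a * (c / a)) with c in Hw by (field; lra). lra. }
  nra.
- right. assert (H2 : a ^ 2 < 2 * c).
  { destruct (Rle_dec (2 * c) (a ^ 2)) as [r|r]; [exfalso; apply H; apply case1_iff; auto|lra]. }
  split; [auto|].
  replace (2 * L * (a + 1)) with (2 * c) in Hw by (unfold c; ring).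
  unfold qc. pose proof (sqrt_sq_eq (2 * c) ltac:(lra)) as Es.
  pose proof (sqrt_pos (2 * c)).
  replace (sqrt (2 * c) ^ 3) with (sqrt (2 * c) * (sqrt (2 * c) * sqrt (2 * c))) by ring.
  replace (sqrt (2 * c) ^ 2) with (sqrt (2 * c) * sqrt (2 * c)) by ring.
  rewrite Es. nra.
Qed.

Lemma qc_min (y z : R) : 0 < y -> 0 <= z -> qc y (2 * y / 3) <= qc y z.
Proof.
intros Hy Hz. unfold qc.
assert (E : z ^ 3 - y * z ^ 2 - ((2 * y / 3) ^ 3 - y * (2 * y / 3) ^ 2) = (z - 2 * y / 3) ^ 2 * (z + y / 3)) by (field; lra).
assert (0 <= (z - 2 * y / 3) ^ 2 * (z + y / 3)).
{ apply Rmult_le_pos; [apply pow2_ge_0|lra]. }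
lra.
Qed.

Lemma h_root (w : R) : thresh L a < w ->
  qc (a + w) (a + hfun L a w) = 0 /\ 2 * (a + w) <= 3 * (a + hfun L a w).
Proof.
intros Hw. pose proof thresh_pos as Ht. pose proof c_pos as Hc.
set (y := a + w).
assert (Hy : 0 < y) by (unfold y; lra).
assert (Hw0 : 0 < w) by lra.
assert (Hb : c * a <= 4 * y ^ 3 / 27).
{ destruct (q_witness w Hw) as [[_ Hq]|[_ Hq]].
  - pose proof (qc_min y a Hy ltac:(lra)). unfold qc in *.
    assert (E : (2 * y / 3) ^ 3 - y * (2 * y / 3) ^ 2 = - (4 * y ^ 3 / 27)) by field.
    fold y in Hq. lra.
  - pose proof (qc_min y (sqrt (2 * c)) Hy (sqrt_pos _)). unfold qc in *.
    assert (E : (2 * y / 3) ^ 3 - y * (2 * y / 3) ^ 2 = - (4 * y ^ 3 / 27)) by field.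
    fold y in Hq. lra. }
unfold hfun, phi, sgn.
destruct (Rlt_dec 0 w) as [_|Hn]; [|lra].
rewrite (Rabs_right w) by lra. fold y.
set (u := 1 - 27 * L * a * (a + 1) / (2 * y ^ 3)).
assert (Hy3 : 0 < y ^ 3) by (apply pow_lt; lra).
assert (Hu1 : u <= 1).
{ unfold u. assert (0 <= 27 * L * a * (a + 1) / (2 * y ^ 3)).
  { apply Rmult_le_pos; [nra|]. left; apply Rinv_0_lt_compat; lra. }
  lra. }
assert (Hu2 : -1 <= u).
{ unfold u. assert (27 * L * a * (a + 1) / (2 * y ^ 3) <= 2).
  { apply Rmult_le_reg_r with (r := 2 * y ^ 3); [lra|].
    unfold Rdiv. rewrite Rmult_assoc, Rinv_l by lra. fold c in Hb.
    replace (27 * L * a * (a + 1) * 1) with (27 * (c * a)) by (unfold c; ring). lra. }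
  lra. }
set (th := acos u / 3).
pose proof (acos_bound u) as Hab.
assert (Hc3 : 4 * cos th ^ 3 - 3 * cos th = u).
{ rewrite <- cos3. unfold th. replace (3 * (acos u / 3)) with (acos u) by field.
  apply cos_acos; lra. }
assert (Hch : 1 / 2 <= cos th).
{ rewrite <- cos_PI3. pose proof PI_RGT_0.
  destruct (Req_dec th (PI / 3)) as [->|Hne]; [lra|].
  left. apply cos_decreasing_1; unfold th in *; lra. }
replace (a + 1 * (2 / 3 * y * cos th - 2 * a / 3 + w / 3)) with (y / 3 + 2 * y * cos th / 3) by (unfold y; field).
split; [|nra].
unfold qc.
assert (E : (y / 3 + 2 * y * cos th / 3) ^ 3 - y * (y / 3 + 2 * y * cos th / 3) ^ 2
            = 2 * y ^ 3 / 27 * (4 * cos th ^ 3 - 3 * cos th - 1)) by field.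
rewrite E, Hc3. unfold u, c. field. lra.
Qed.

Lemma g_props (w : R) : thresh L a < w ->
  a <= a + hfun L a w /\ 2 * c <= (a + hfun L a w) ^ 2.
Proof.
intros Hw. pose proof thresh_pos as Ht. pose proof c_pos as Hc.
destruct (h_root w Hw) as [Hq H3].
set (z := a + hfun L a w) in *.
assert (Hy : 0 < a + w) by lra.
destruct (q_witness w Hw) as [[H1 Hq1]|[H1 Hq1]].
- pose proof (qc_largest (a + w) z a Hy Hq H3 ltac:(lra) Hq1). split; nra.
- pose proof (qc_largest (a + w) z (sqrt (2 * c)) Hy Hq H3 (sqrt_pos _) Hq1).
  pose proof (sqrt_sq_eq (2 * c) ltac:(lra)) as Es.
  assert (a < sqrt (2 * c)).
  { assert (Ea : sqrt (a ^ 2) = a) by (apply sqrt_pow2; lra). rewrite <- Ea at 1. apply sqrt_lt_1; nra. }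
  pose proof (sqrt_pos (2 * c)). split; nra.
Qed.

Lemma gfun_nonneg (w : R) : 0 <= w -> 0 <= gfun L a w.
Proof.
intros Hw. unfold gfun. rewrite (Rabs_right w) by lra.
destruct (Rle_dec w (thresh L a)) as [H|H]; [lra|].
apply Rnot_le_lt in H. destruct (g_props w H). lra.
Qed.

Lemma gfun_mono (w1 w2 : R) : 0 <= w1 -> w1 <= w2 -> gfun L a w1 <= gfun L a w2.
Proof.
intros H1 H2. pose proof (gfun_nonneg w2 ltac:(lra)) as Hg2. unfold gfun in *.
rewrite (Rabs_right w1) by lra. rewrite (Rabs_right w2) in * by lra.
destruct (Rle_dec w1 (thresh L a)) as [A|A]; [auto|].
destruct (Rle_dec w2 (thresh L a)) as [B|B]; [lra|].
apply Rnot_le_lt in A. apply Rnot_le_lt in B.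
destruct (h_root w1 A) as [Hq1 H31]. destruct (h_root w2 B) as [Hq2 H32].
destruct (g_props w1 A) as [Hz1 _].
set (z1 := a + hfun L a w1) in *. set (z2 := a + hfun L a w2) in *.
assert (Hq : qc (a + w2) z1 <= 0).
{ unfold qc in *. assert (0 <= (w2 - w1) * z1 ^ 2) by (apply Rmult_le_pos; [lra|apply pow2_ge_0]).
  nra. }
pose proof (qc_largest (a + w2) z2 z1 ltac:(lra) Hq2 H32 ltac:(lra) Hq).
unfold z1, z2 in *. lra.
Qed.

Lemma rho0 : rho a 0 = 0.
Proof. unfold rho. unfold Rdiv. ring. Qed.

Lemma gfun_prox (w x : R) : 0 <= w -> 0 <= x -> fsc L a w (gfun L a w) <= fsc L a w x.
Proof.
intros Hw Hx. pose proof thresh_pos as Ht. pose proof c_pos as Hc. unfold gfun.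
rewrite (Rabs_right w) by lra.
destruct (Rle_dec w (thresh L a)) as [H|H].
- unfold fsc. rewrite rho0. unfold rho.
  assert (Hb : w <= x / 2 + c / (a + x)).
  { unfold thresh in H. destruct (Rle_dec L (a ^ 2 / (2 * (a + 1)))) as [H1|H1].
    - apply case1_iff in H1.
      replace (L * (a + 1) / a) with (c / a) in H by (unfold c; field; lra).
      assert (E : x / 2 + c / (a + x) - c / a = x * (a * (a + x) - 2 * c) / (2 * a * (a + x))) by (field; lra).
      assert (0 <= x * (a * (a + x) - 2 * c) / (2 * a * (a + x))).
      { apply Rmult_le_pos; [apply Rmult_le_pos; nra|]. left; apply Rinv_0_lt_compat; nra. }
      lra.
    - replace (2 * L * (a + 1)) with (2 * c) in H by (unfold c; ring).
      pose proof (sqrt_sq_eq (2 * c) ltac:(lra)) as Es. set (r := sqrt (2 * c)) in *.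
      assert (E : x / 2 + c / (a + x) - (r - a / 2) = (a + x - r) ^ 2 / (2 * (a + x))) by (replace c with (r * r / 2) by lra; field; lra).
      assert (0 <= (a + x - r) ^ 2 / (2 * (a + x))).
      { apply Rmult_le_pos; [apply pow2_ge_0|]. left; apply Rinv_0_lt_compat; nra. }
      lra. }
  assert (E : / 2 * (x - w) ^ 2 + L * ((a + 1) * x / (a + x)) - (/ 2 * (0 - w) ^ 2 + L * 0)
            = x * (x / 2 + c / (a + x) - w)) by (unfold c; field; lra).
  assert (0 <= x * (x / 2 + c / (a + x) - w)) by (apply Rmult_le_pos; lra).
  lra.
- apply Rnot_le_lt in H.
  destruct (h_root w H) as [Hq _]. destruct (g_props w H) as [Hz Hz2].
  assert (Eg : hfun L a w = (a + hfun L a w) - a) by ring.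
  rewrite Eg. set (z := a + hfun L a w) in *.
  assert (Hzp : 0 < z) by lra.
  assert (Ew : w = z - a + c * a / z ^ 2).
  { unfold qc in Hq. apply Rmult_eq_reg_r with (r := z ^ 2); [|apply pow_nonzero; lra].
    field_simplify; [|lra]. nra. }
  rewrite Ew. unfold fsc, rho.
  assert (E : / 2 * (x - (z - a + c * a / z ^ 2)) ^ 2 + L * ((a + 1) * x / (a + x))
           - (/ 2 * (z - a - (z - a + c * a / z ^ 2)) ^ 2 + L * ((a + 1) * (z - a) / (a + (z - a))))
           = (x - (z - a)) ^ 2 * ((a + x) * z ^ 2 - 2 * c * a) / (2 * (a + x) * z ^ 2)).
  { unfold c. field. split; lra. }
  assert (0 <= (x - (z - a)) ^ 2 * ((a + x) * z ^ 2 - 2 * c * a) / (2 * (a + x) * z ^ 2)).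
  { apply Rmult_le_pos; [apply Rmult_le_pos; [apply pow2_ge_0|nra]|].
    left; apply Rinv_0_lt_compat. assert (0 < z ^ 2) by (apply pow_lt; lra). nra. }
  lra.
Qed.

End Sc.

Lemma rsum_comb3 (f g h : nat -> R) (a b c : R) n :
  rsum (fun i => a * f i + b * g i + c * h i) n = a * rsum f n + b * rsum g n + c * rsum h n.
Proof. rewrite !rsum_plus, !rsum_scal. reflexivity. Qed.

Lemma frob_quad m n X Z (t : R) :
  frob m n (fun i j => X i j + t * Z i j) (fun i j => X i j + t * Z i j)
  = frob m n X X + 2 * t * frob m n X Z + t * t * frob m n Z Z.
Proof.
unfold frob.
rewrite (rsum_ext _ (fun i => 1 * rsum (fun j => X i j * X i j) n + (2 * t) * rsum (fun j => X i j * Z i j) n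
   + (t * t) * rsum (fun j => Z i j * Z i j) n)).
- rewrite rsum_comb3. ring.
- intros i _. rewrite <- rsum_comb3. apply rsum_ext; intros; ring.
Qed.

Lemma frob_nonneg m n X : 0 <= frob m n X X.
Proof. unfold frob. apply rsum_nonneg; intros. apply rsum_nonneg; intros. apply Rle_0_sqr. Qed.

Lemma frob_zero m n X : frob m n X X <= 0 -> forall i j, (i < m)%nat -> (j < n)%nat -> X i j = 0.
Proof.
intros H i j Hi Hj.
assert (Hrow : forall i, (i < m)%nat -> 0 <= rsum (fun j => X i j * X i j) n)
  by (intros; apply rsum_nonneg; intros; apply Rle_0_sqr).
assert (Hr : rsum (fun j => X i j * X i j) n <= 0).
{ unfold frob in H. pose proof (sq_le_rsum (fun i => sqrt (rsum (fun j => X i j * X i j) n)) m i Hi) as H1.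
  simpl in H1. rewrite sqrt_sqrt in H1 by auto.
  assert (rsum (fun i0 => sqrt (rsum (fun j0 => X i0 j0 * X i0 j0) n) * sqrt (rsum (fun j0 => X i0 j0 * X i0 j0) n)) m
          = rsum (fun i => rsum (fun j => X i j * X i j) n) m).
  { apply rsum_ext; intros. apply sqrt_sqrt; auto. }
  lra. }
apply (rsum_sq_zero (fun j => X i j) n Hr j Hj).
Qed.

Lemma frob_lin_r m n X Y Z (t : R) :
  frob m n X (fun i j => Y i j + t * Z i j) = frob m n X Y + t * frob m n X Z.
Proof.
unfold frob. rewrite <- rsum_scal, <- rsum_plus. apply rsum_ext; intros.
rewrite <- rsum_scal, <- rsum_plus. apply rsum_ext; intros. ring.
Qed.

Lemma frob_sym m n X Y : frob m n X Y = frob m n Y X.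
Proof. unfold frob. apply rsum_ext; intros; apply rsum_ext; intros; ring. Qed.

Lemma frob_scal_r m n X Z (c : R) : frob m n X (fun i j => c * Z i j) = c * frob m n X Z.
Proof.
unfold frob. rewrite <- rsum_scal. apply rsum_ext; intros. rewrite <- rsum_scal. apply rsum_ext; intros. ring.
Qed.

Theorem mainTheorem4 (m n p : nat) (a lam mu : R)
  (A : nat -> nat -> R) (b : nat -> R) (normA : R) (Xs : nat -> nat -> R) :
  (m <= n)%nat -> 0 < a -> 0 < lam ->
  is_spectral_norm p (m * n) A normA ->
  0 < mu -> mu * normA ^ 2 < 1 ->
  (forall X : nat -> nat -> R, objective a lam m n p A b Xs <= objective a lam m n p A b X) ->
  forall (U : nat -> nat -> R) (s : nat -> R) (V : nat -> nat -> R),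
    is_svd m n (Bmu mu m n p A b Xs) U s V ->
    forall i j, (i < m)%nat -> (j < n)%nat ->
      Xs i j = rsum (fun k => U i k * gfun (lam * mu) a (s k) * V j k) m.
Proof.
intros Hmn Ha Hlam Hspec Hmu Hmu2 Hmin U s V Hsvd i j Hi Hj.
assert (Hm : (0 < m)%nat) by lia.
assert (HL : 0 < lam * mu) by nra.
remember (fun k => gfun (lam * mu) a (s k)) as g eqn:Hg.
remember (svdm m U g V) as Y eqn:HY.
assert (Goal' : Y i j = rsum (fun k => U i k * gfun (lam * mu) a (s k) * V j k) m) by (subst; reflexivity).
rewrite <- Goal'. clear Goal'.
remember (Bmu mu m n p A b Xs) as Bm eqn:HBm.
pose proof Hsvd as [HU [HV [Hs0 [Hsd HBeq]]]].
assert (HsvdY : is_svd m n Y U g V).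
{ split; [auto|split; [auto|split; [|split]]].
  - intros k Hk. subst g. apply gfun_nonneg; auto.
  - intros k Hk. subst g. apply gfun_mono; auto; apply Hs0; lia.
  - intros i0 j0 _ _. subst Y. reflexivity. }
destruct (singvals_spec m n Y (ex_intro _ U (ex_intro _ g (ex_intro _ V HsvdY)))) as [UY [VY HY']].
assert (TY : Tfun a m n Y = rsum (fun k => rho a (g k)) m).
{ rewrite Tfun_eq by (eapply svd_dec; eauto). apply rsum_ext; intros k Hk.
  rewrite (svd_unique _ _ _ _ _ _ _ _ _ HY' HsvdY k Hk). reflexivity. }
destruct (singvals_spec m n Xs (svd_exists m n Xs Hmn)) as [UX [VX HX]].
remember (singvals m n Xs) as sg eqn:Hsg.
assert (TX : Tfun a m n Xs = rsum (fun k => rho a (sg k)) m).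
{ rewrite Tfun_eq by (rewrite <- Hsg; eapply svd_dec; eauto). rewrite Hsg. reflexivity. }
pose proof (svd_dec _ _ _ _ _ _ HX) as [_ Hsg0].
assert (FY : frob m n (fun i j => Y i j + (-1) * Bm i j) (fun i j => Y i j + (-1) * Bm i j)
             = rsum (fun k => (g k - s k) * (g k - s k)) m).
{ rewrite (frob_ext m n _ (svdm m U (fun k => g k - s k) V) _ (svdm m U (fun k => g k - s k) V)).
  - apply frob_svd_same; auto.
  - intros i0 j0 Hi0 Hj0. rewrite HBeq by auto. subst Y. unfold svdm.
    rewrite <- rsum_scal, <- rsum_plus. apply rsum_ext; intros; ring.
  - intros i0 j0 Hi0 Hj0. rewrite HBeq by auto. subst Y. unfold svdm.
    rewrite <- rsum_scal, <- rsum_plus. apply rsum_ext; intros; ring. }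
assert (FXX : frob m n Xs Xs = rsum (fun k => sg k * sg k) m).
{ rewrite (frob_ext m n _ (svdm m UX sg VX) _ (svdm m UX sg VX)).
  - apply frob_svd_same; [eapply svd_orthU; eauto|eapply svd_orthV; eauto].
  - intros; eapply svd_eq; eauto.
  - intros; eapply svd_eq; eauto. }
assert (FBB : frob m n Bm Bm = rsum (fun k => s k * s k) m).
{ rewrite (frob_ext m n _ (svdm m U s V) _ (svdm m U s V)).
  - apply frob_svd_same; auto.
  - intros; eapply svd_eq; eauto.
  - intros; eapply svd_eq; eauto. }
assert (FXB : frob m n Xs Bm <= rsum (fun k => sg k * s k) m).
{ rewrite (frob_ext m n _ (svdm m UX sg VX) _ (svdm m U s V)).
  - apply von_neumann; auto; try (eapply svd_orthU; eauto); try (eapply svd_orthV; eauto);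
      eapply svd_dec; eauto.
  - intros; eapply svd_eq; eauto.
  - intros; eapply svd_eq; eauto. }
assert (FX : frob m n (fun i j => Xs i j + (-1) * Bm i j) (fun i j => Xs i j + (-1) * Bm i j)
   = frob m n Xs Xs + 2 * (-1) * frob m n Xs Bm + (-1) * (-1) * frob m n Bm Bm) by apply frob_quad.
assert (Hprox : rsum (fun k => fsc (lam * mu) a (s k) (g k)) m <= rsum (fun k => fsc (lam * mu) a (s k) (sg k)) m).
{ apply rsum_le; intros k Hk. subst g. apply gfun_prox; auto. }
assert (Pg : rsum (fun k => fsc (lam * mu) a (s k) (g k)) m
   = / 2 * rsum (fun k => (g k - s k) * (g k - s k)) m + (lam * mu) * rsum (fun k => rho a (g k)) m).
{ rewrite <- !rsum_scal, <- rsum_plus. apply rsum_ext; intros. unfold fsc. ring. }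
assert (Ps : rsum (fun k => fsc (lam * mu) a (s k) (sg k)) m
   = / 2 * (1 * rsum (fun k => sg k * sg k) m + (-2) * rsum (fun k => sg k * s k) m + 1 * rsum (fun k => s k * s k) m)
     + (lam * mu) * rsum (fun k => rho a (sg k)) m).
{ rewrite <- rsum_comb3, <- !rsum_scal, <- rsum_plus. apply rsum_ext; intros. unfold fsc. ring. }
set (D := fun i j => Y i j + (-1) * Xs i j).
set (r0 := fun r => calA m n p A Xs r - b r).
assert (HcY : forall r, calA m n p A Y r = calA m n p A Xs r + calA m n p A D r).
{ intros r. unfold calA, matvec, vecm, D. rewrite <- rsum_plus. apply rsum_ext; intros; ring. }
assert (ObjY : rsum (fun r => (calA m n p A Y r - b r) ^ 2) p
   = 1 * rsum (fun r => r0 r ^ 2) p + 2 * rsum (fun r => calA m n p A D r * r0 r) p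
     + 1 * rsum (fun r => calA m n p A D r ^ 2) p).
{ rewrite <- rsum_comb3. apply rsum_ext; intros r _. rewrite HcY. unfold r0. ring. }
assert (Eadj : rsum (fun r => calA m n p A D r * r0 r) p = frob m n D (calA_adj m n p A r0)) by (apply adjoint; auto).
assert (HBm' : forall i j, Bm i j = Xs i j + (- mu) * calA_adj m n p A r0 i j).
{ intros i0 j0. rewrite HBm. unfold Bmu.
  assert (E : calA_adj m n p A (fun r => b r - calA m n p A Xs r) i0 j0 = (-1) * calA_adj m n p A r0 i0 j0).
  { unfold calA_adj, r0. rewrite <- rsum_scal. apply rsum_ext; intros; ring. }
  rewrite E. ring. }
assert (HC : frob m n D (fun i j => Xs i j + (-1) * Bm i j) = mu * frob m n D (calA_adj m n p A r0)).
{ rewrite <- frob_scal_r. apply frob_ext; intros; [reflexivity|]. rewrite HBm'. ring. }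
assert (FYexp : frob m n (fun i j => Y i j + (-1) * Bm i j) (fun i j => Y i j + (-1) * Bm i j)
   = frob m n D D + 2 * 1 * frob m n D (fun i j => Xs i j + (-1) * Bm i j)
     + 1 * 1 * frob m n (fun i j => Xs i j + (-1) * Bm i j) (fun i j => Xs i j + (-1) * Bm i j)).
{ rewrite <- frob_quad. apply frob_ext; intros; unfold D; ring. }
assert (HQ : rsum (fun r => calA m n p A D r ^ 2) p <= normA ^ 2 * frob m n D D).
{ pose proof (spec_bound p (m * n) A normA (vecm m n D) Hspec) as H1.
  rewrite (rsum_vec m n (fun x => x ^ 2) D Hm) in H1.
  replace (frob m n D D) with (rsum (fun i => rsum (fun j => D i j ^ 2) n) m).
  - exact H1.
  - unfold frob. apply rsum_ext; intros; apply rsum_ext; intros; ring. }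
assert (HFD0 : 0 <= frob m n D D) by apply frob_nonneg.
pose proof (Hmin Y) as HmY. unfold objective in HmY. rewrite ObjY, TY, TX in HmY.
assert (HFD : frob m n D D <= 0).
{ change (rsum (fun r => (calA m n p A Xs r - b r) ^ 2) p) with (rsum (fun r => r0 r ^ 2) p) in HmY.
  clearbody D r0. clear HY HBm Hg Hsg.
  assert (mu * rsum (fun r => calA m n p A D r ^ 2) p <= mu * (normA ^ 2 * frob m n D D))
    by (apply Rmult_le_compat_l; lra).
  assert (frob m n D D * (1 - mu * normA ^ 2) <= 0).
  { rewrite FYexp, FX, FXX, FBB in FY. rewrite Pg, Ps in Hprox. rewrite HC in FY.
    rewrite Eadj in HmY.
    assert (Hk : 0 <= mu * (frob m n D (calA_adj m n p A r0) + / 2 * rsum (fun r => calA m n p A D r ^ 2) p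
       + lam * (rsum (fun k => rho a (g k)) m - rsum (fun k => rho a (sg k)) m))).
    { apply Rmult_le_pos; lra. }
    lra. }
  nra. }
pose proof (frob_zero m n D HFD i j Hi Hj) as HD. unfold D in HD. lra.
Qed.
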